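(* Assume the lifted model described in the context is well-posed and topologically detectable, and let $\mathcal{G}_T$ be its topology. Let $i\neq j$ be vertices with $i\in N_{\mathcal{G}_T}(j,2)$ and $i\notin N_{\mathcal{G}_T}(j)$ (i.e. $i$ and $j$ are strict two-hop neighbors). Then the $T\times T$ matrix $\mathbf{B}_j'\,\Phi_X^{-1}(\omega)\,\mathbf{B}_i$ is Hermitian positive semidefinite, $\mathbf{B}_j'\Phi_X^{-1}(\omega)\mathbf{B}_i\succeq0$, for all $\omega\in[0,2\pi)$ (at which it is defined).
   Context: Model: real $b_{ij}\ge0$ for $i\ne j$, $b_{ii}=0$; for each $i$ a stable scalar filter $g_i$ with $z$-transform $1/\mathsf{S}_i(z)$, $\mathsf{S}_i(z)=\sum_{n=1}^{l}a_{n,i}\big(\frac{2(1-z^{-1})}{\Delta t(1+z^{-1})}\big)^n+\sum_{j\ne i}b_{ij}$; $h_{ij}=b_{ij}g_i$. For a scalar filter $f$ its $T$-lifting is the $T\times T$ matrix filter with $(p,t)$ entry $a\mapsto f(aT+p-t)$, $p,t\in\{0,\dots,T-1\}$. Let $H_{ij}$ be the $T$-lifting of $h_{ij}$ (so $H_{ij}=b_{ij}G_i$ with $G_i$ the lifting of $g_i$, and $H_{ii}=\mathbf{0}$), with frequency response $\mathsf{H}_{ij}(\omega)=\sum_a H_{ij}[a]e^{-\mathrm{i}\omega a}$. The lifted processes $X_i$, $E_i$ ($T$-vector valued) satisfy $X_i(k)=\sum_j (H_{ij}*X_j)(k)+E_i(k)$; $E_1,\dots,E_m$ are jointly wide-sense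 stationary, zero-mean and mutually uncorrelated, with power spectral density matrices $\Phi_{E_i}(\omega)$. Stack $X=[X_1',\dots,X_m']'$, $E=[E_1',\dots,E_m']'$ and let $\mathbb{H}(\omega)$ be the $mT\times mT$ block matrix with $(i,j)$ block $\mathsf{H}_{ij}(\omega)$, so $X=\mathbb{H}*X+E$. Well-posed: $\mathbb{I}-\mathbb{H}(\omega)$ is invertible for almost every $\omega$ (so $X=(\mathbb{I}-\mathbb{H})^{-1}E$ and $\Phi_X(\omega)$ denotes the power spectral density of $X$). Topologically detectable: $\Phi_{E_j}(\omega)\succ0$ for every $\omega$ and every $j$. $\mathbf{B}_j\in\mathbb{R}^{mT\times T}$ is the block column matrix whose $j$-th $T\times T$ block is $I_T$ and whose other blocks are zero. Graphs: the LDG $\mathcal{G}$ has vertices $1,\dots,m$ and a directed edge $i\to j$ iff $b_{ji}\ne0$; the children of $j$ are $\mathcal{C}_{\mathcal{G}}(j)=\{k: b_{kj}\neq0\}$. The topology $\mathcal{G}_T$ is the undirected graph with an edge $\{i,j\}$ iff $b_{ij}\neq0$ or $b_{ji}\neq0$; $N_{\mathcal{G}_T}(j)$ is the set of neighbors of $j$ in $\mathcal{G}_T$, and $N_{\mathcal{G}_T}(j,2)=\{i: \text{there is } k \text{ with } \{j,k\},\{i,k\}\text{ edges of }\mathcal{G}_T\}$. *)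

(* Defs.v *)
(* Frequency-domain (fixed-frequency) rendering of the lifted
   network model. *)
From HB Require Import structures.
From mathcomp Require Import all_boot all_order all_algebra.
Set Implicit Arguments. Unset Strict Implicit. Unset Printing Implicit Defensive.
Import Order.TTheory GRing.Theory Num.Theory.
Local Open Scope ring_scope.

Section Model.
Variable C : numClosedFieldType.

Definition ctrmx (p q : nat) (A : 'M[C]_(p, q)) : 'M[C]_(q, p) :=
  map_mx Num.conj (trmx A).

Definition hermitianmx (n : nat) (A : 'M[C]_n) : Prop := ctrmx A = A.

Definition psdmx (n : nat) (A : 'M[C]_n) : Prop :=
  hermitianmx A /\ forall v : 'cV[C]_n, 0 <= (ctrmx v *m A *m v) 0 0.

Definition pdmx (n : nat) (A : 'M[C]_n) : Prop :=
  hermitianmx A /\ forall v : 'cV[C]_n, v != 0 -> 0 < (ctrmx v *m A *m v) 0 0.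

Variables (m T : nat).

(* the stacked dimension m*T, as a sum of m blocks of size T *)
Notation mT := (\sum_(k < m) (fun _ : 'I_m => T) k)%N.

Definition bigH (b : 'I_m -> 'I_m -> C) (G : 'I_m -> 'M[C]_T) : 'M[C]_mT :=
  @mxblock C m m (fun _ => T) (fun _ => T) (fun i j => b i j *: G i).

(* block diagonal PSD of E = [E_1', ..., E_m']' (mutually uncorrelated) *)
Definition PhiE (PE : 'I_m -> 'M[C]_T) : 'M[C]_mT :=
  @mxdiag C m (fun _ => T) PE.

(* PSD of X = (I - H)^{-1} E :  (I-H)^{-1} Phi_E (I-H)^{-*} *)
Definition PhiX (b : 'I_m -> 'I_m -> C) (G : 'I_m -> 'M[C]_T)
  (PE : 'I_m -> 'M[C]_T) : 'M[C]_mT :=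
  invmx (1%:M - bigH b G) *m PhiE PE *m ctrmx (invmx (1%:M - bigH b G)).

Definition Bsel (j : 'I_m) : 'M[C]_(mT, T) :=
  @mxcol C m (fun _ => T) T (fun k => if k == j then 1%:M else 0).

Definition topo_edge (b : 'I_m -> 'I_m -> C) (i j : 'I_m) : bool :=
  (b i j != 0) || (b j i != 0).

Definition nbr (b : 'I_m -> 'I_m -> C) (j i : 'I_m) : Prop := topo_edge b j i.

Definition nbr2 (b : 'I_m -> 'I_m -> C) (j i : 'I_m) : Prop :=
  exists k : 'I_m, topo_edge b j k /\ topo_edge b i k.

End Model.
Arguments Bsel {C m} T j.

(* Main.v *)
Require Import Defs.
From HB Require Import structures.
From mathcomp Require Import all_boot all_order all_algebra.
Import Order.TTheory GRing.Theory Num.Theory.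
Local Open Scope ring_scope.
Set Implicit Arguments. Unset Strict Implicit. Unset Printing Implicit Defensive.

Section Aux.
Variable C : numClosedFieldType.

Lemma ctrmx_mul (p q r : nat) (A : 'M[C]_(p, q)) (B : 'M[C]_(q, r)) :
  ctrmx (A *m B) = ctrmx B *m ctrmx A.
Proof. by rewrite /ctrmx trmx_mul map_mxM. Qed.

Lemma ctrmxK (p q : nat) (A : 'M[C]_(p, q)) : ctrmx (ctrmx A) = A.
Proof. by apply/matrixP => x y; rewrite !mxE conjCK. Qed.

Lemma ctrmx1 (n : nat) : ctrmx (1%:M : 'M[C]_n) = 1%:M.
Proof. by rewrite /ctrmx trmx1 map_mx1. Qed.

Lemma ctrmxD (p q : nat) (A B : 'M[C]_(p, q)) : ctrmx (A + B) = ctrmx A + ctrmx B.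
Proof. by apply/matrixP => x y; rewrite !mxE rmorphD. Qed.

Lemma ctrmx0 (p q : nat) : ctrmx (0 : 'M[C]_(p, q)) = 0.
Proof. by apply/matrixP => x y; rewrite !mxE rmorph0. Qed.

Lemma ctrmxZ (p q : nat) (c : C) (A : 'M[C]_(p, q)) : ctrmx (c *: A) = c^* *: ctrmx A.
Proof. by apply/matrixP => x y; rewrite !mxE rmorphM. Qed.

Lemma psd0 n : psdmx (0 : 'M[C]_n).
Proof.
split; first by apply/matrixP => x y; rewrite /ctrmx !mxE rmorph0.
by move=> v; rewrite mulmx0 mul0mx mxE.
Qed.

Lemma psdD n (A B : 'M[C]_n) : psdmx A -> psdmx B -> psdmx (A + B).
Proof.
move=> [hA qA] [hB qB]; split; first by rewrite /Defs.hermitianmx ctrmxD hA hB.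
by move=> v; rewrite mulmxDr mulmxDl mxE addr_ge0.
Qed.

Lemma psdZ n (c : C) (A : 'M[C]_n) : 0 <= c -> psdmx A -> psdmx (c *: A).
Proof.
move=> c0 [hA qA]; split; first by rewrite /Defs.hermitianmx ctrmxZ hA geC0_conj.
by move=> v; rewrite -scalemxAr -scalemxAl mxE mulr_ge0.
Qed.

Lemma psd_sum (I : finType) n (c : I -> C) (A : I -> 'M[C]_n) :
  (forall k, 0 <= c k) -> (forall k, psdmx (A k)) -> psdmx (\sum_k c k *: A k).
Proof.
move=> hc hA; apply: (big_ind (@psdmx C n)); [exact: psd0 | exact: psdD |].
by move=> k _; apply: psdZ.
Qed.

Lemma psd_congr n r (A : 'M[C]_n) (B : 'M[C]_(n, r)) :
  psdmx A -> psdmx (ctrmx B *m A *m B).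
Proof.
move=> [hA qA]; split.
  by rewrite /Defs.hermitianmx !ctrmx_mul ctrmxK hA mulmxA.
move=> v; have := qA (B *m v); by rewrite ctrmx_mul !mulmxA.
Qed.

Lemma pd_unit n (A : 'M[C]_n) : pdmx A -> A \in unitmx.
Proof.
move=> [hA qA]; rewrite unitmxE unitfE; apply/negP => /det0P [v v0 vA].
have cv0 : ctrmx v != 0.
  by apply: contra v0 => /eqP e; rewrite -(ctrmxK v) e ctrmx0.
have := qA (ctrmx v) cv0; rewrite ctrmxK.
by rewrite vA mul0mx mxE ltxx.
Qed.

Lemma pd_inv_psd n (A : 'M[C]_n) : pdmx A -> psdmx (invmx A).
Proof.
move=> hpd; have u := pd_unit hpd; case: hpd => [hA qA].
have hQ : ctrmx (invmx A) = invmx A.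
  have e : ctrmx (invmx A) *m A = 1%:M.
    by rewrite -{2}hA -ctrmx_mul mulmxV // ctrmx1.
  by rewrite -[LHS]mulmx1 -(mulmxV u) mulmxA e mul1mx.
split => // v.
set w := invmx A *m v.
have e : ctrmx v *m invmx A *m v = ctrmx w *m A *m w.
  by rewrite /w ctrmx_mul hQ -!mulmxA (mulmxA A) mulmxV // mul1mx.
rewrite e; have [->|w0] := eqVneq w 0; first by rewrite mulmx0 mxE.
exact/ltW/qA.
Qed.

End Aux.

Lemma ctrmxN (C : numClosedFieldType) (p q : nat) (A : 'M[C]_(p, q)) : ctrmx (- A) = - ctrmx A.
Proof. by apply/matrixP => x y; rewrite !mxE rmorphN. Qed.

Lemma ctrmx_mxcol (C : numClosedFieldType) (m T n : nat) (F : 'I_m -> 'M[C]_(T, n)) :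
  ctrmx (@mxcol C m (fun _ => T) n F) = @mxrow C m (fun _ => T) n (fun k => ctrmx (F k)).
Proof. by apply/matrixP => x y; rewrite !mxE. Qed.

Lemma ctrmx_Bsel (C : numClosedFieldType) (m T : nat) (j : 'I_m) :
  ctrmx (@Bsel C m T j) = trmx (Bsel T j).
Proof.
apply/matrixP => x y; rewrite !mxE; case: ifP => _; rewrite !mxE ?rmorph_nat //.
by rewrite rmorph0.
Qed.

Theorem theorem3p1 (C : numClosedFieldType) (m T : nat)
  (b : 'I_m -> 'I_m -> C)            (* coupling coefficients b_ij *)
  (G : 'I_m -> 'M[C]_T)               (* G_i(omega): response of lifted g_i *)
  (PE : 'I_m -> 'M[C]_T)              (* Phi_{E_i}(omega) *)
  (hb_nonneg : forall i j, i != j -> 0 <= b i j)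
  (hb_diag : forall i, b i i = 0)
  (hwell : (1%:M - bigH b G) \in unitmx)          (* well-posed at omega *)
  (hdetect : forall k, pdmx (PE k))               (* topologically detectable *)
  (i j : 'I_m) (hij : i != j)
  (h2 : nbr2 b j i) (h1 : ~ nbr b j i) :
  psdmx (trmx (Bsel T j) *m invmx (PhiX b G PE) *m Bsel T i).
Proof.
have bge0 k l : 0 <= b k l.
  by have [->|kl] := eqVneq k l; [rewrite hb_diag | exact: hb_nonneg].
have [bji bij] : b j i = 0 /\ b i j = 0.
  move: h1; rewrite /nbr /topo_edge => /negP; rewrite negb_or !negbK.
  by case/andP => /eqP -> /eqP ->.
have hPE k : PE k \in unitmx by exact: pd_unit.
set M := 1%:M - bigH b G.
set D' := PhiE (fun k => invmx (PE k)).
have hPhi : PhiE PE *m D' = 1%:M.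
  rewrite /D' /PhiE {1}/mxdiag mul_mxblock_mxdiag -(mxdiagZ 1) /mxdiag.
  apply: eq_mxblock => k l; case: eqVneq => [<-|_]; rewrite ?conform_mx_id ?mulmxV ?mul0mx //.
have hinv : invmx (PhiX b G PE) = ctrmx M *m D' *m M.
  have e : PhiX b G PE *m (ctrmx M *m D' *m M) = 1%:M.
    rewrite /PhiX -/M !mulmxA -(mulmxA _ (ctrmx (invmx M))) -ctrmx_mul mulmxV //.
    rewrite ctrmx1 mulmx1 -(mulmxA _ (PhiE PE)) hPhi mulmx1; exact: mulVmx.
  have [uX _] := mulmx1_unit e.
  by rewrite -[LHS]mulmx1 -e (mulmxA (invmx _)) mulVmx // mul1mx.
have hMB k0 : M *m Bsel T k0 =
    @mxcol C m (fun _ => T) T (fun k => (if k == k0 then 1%:M else 0) - b k k0 *: G k).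
  rewrite /M mulmxBl mul1mx /bigH /Bsel mul_mxblock_mxrow -mxcolB; apply: eq_mxcol => k.
  under eq_bigr => l _ do rewrite (fun_if (mulmx _)) mulmx1 mulmx0.
  by rewrite -big_mkcond big_pred1_eq.
rewrite hinv -ctrmx_Bsel !mulmxA -ctrmx_mul -!mulmxA mulmxA hMB.
rewrite hMB ctrmx_mxcol /D' /PhiE mul_mxrow_mxdiag mul_mxrow_mxcol.
rewrite (eq_bigr (fun k => (b k j * b k i) *: (ctrmx (G k) *m invmx (PE k) *m G k))).
  apply: psd_sum => k; first exact: mulr_ge0.
  exact/psd_congr/pd_inv_psd.
move=> k _.
have [->|kj] := eqVneq k j.
  by rewrite eq_sym (negbTE hij) bji hb_diag !scale0r !subr0 mulmx0 mul0r scale0r.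
have [->|ki] := eqVneq k i.
  by rewrite bij hb_diag !scale0r !subr0 ctrmx0 !mul0mx mul0r scale0r.
rewrite !sub0r ctrmxN ctrmxZ !mulNmx mulmxN opprK.
by rewrite -!scalemxAl -!scalemxAr -?scalemxAl scalerA geC0_conj.
Qed.
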